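(* Let $(M,d)$ be a compact metric space, $\mu$ a probability measure on $M$, $k:M\times M\to[0,1]$ measurable, $M^s\subseteq M$ measurable, and $\rho>0$. For a probability measure $\nu$ on $M$ and measurable $v:M\setminus M^s\to[0,1]$ define, for $x\in M\setminus M^s$, $$(T_\nu v)(x)=\frac{\int_{M^s}k(x,y)\,d\nu(y)+\int_{M\setminus M^s}k(x,y)v(y)\,d\nu(y)}{\rho+\int_M k(x,y)\,d\nu(y)}.$$ Let $v^*:M\setminus M^s\to[0,1]$ be the unique measurable map with $T_\mu v^*=v^*$. For a finite sample $S=\{x_1,\dots,x_n\}$ let $\mu_S$ be the empirical measure $\mu_S(P)=\frac1n\sum_{i=1}^n\mathbf 1(x_i\in P)$. Then for every $x\in M\setminus M^s$ and every $\epsilon>0$, $$\Pr_{S\sim\mu^n}\Big[\big|(T_\mu v^* )(x)-(T_{\mu_S}v^* )(x)\big|>\epsilon\Big]<4\exp\Big(-\frac{n\rho^2\epsilon^2}{9}\Big),$$ where $S\sim\mu^n$ means $x_1,\dots,x_n$ are i.i.d. with law $\mu$. *)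

(* Defs.v *)
From HB Require Import structures.
From mathcomp Require Import all_boot all_order all_algebra.
From mathcomp Require Import all_classical all_reals all_analysis.
Set Implicit Arguments. Unset Strict Implicit. Unset Printing Implicit Defensive.
Import Order.TTheory GRing.Theory Num.Theory.
Import numFieldNormedType.Exports.
Local Open Scope classical_set_scope.
Local Open Scope ring_scope.

(* MathComp-Analysis' generated-sigma-algebra type needs a pointed carrier;
   [withpt t0] is T pointed at t0 (a harmless technicality: any space
   carrying a probability measure is nonempty). *)
Definition withpt (T : Type) (t0 : T) : Type := T.
Section withpt_instances.
Variables (T : topologicalType) (t0 : T).
HB.instance Definition _ := Choice.on (withpt t0).
HB.instance Definition _ := isPointed.Build (withpt t0) t0.
End withpt_instances.

Definition borel (T : topologicalType) (t0 : T) :=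
  @g_sigma_algebraType (withpt t0) (@open T).

Definition empirical {d} {T : measurableType d} {R : realType} (s : seq T)
  : {measure set T -> \bar R} :=
  mscale ((size s)%:R^-1)%:nng
    (msum (fun k => @dirac _ T (nth point s k) R) (size s)).

Definition Top {d} {T : measurableType d} {R : realType}
  (nu : {measure set T -> \bar R}) (k : T * T -> R) (Ms : set T) (rho : R)
  (v : T -> R) (x : T) : R :=
  (\int[nu]_(y in Ms) k (x, y) + \int[nu]_(y in ~` Ms) (k (x, y) * v y))
  / (rho + \int[nu]_(y in [set: T]) k (x, y)).

Definition mutually_independent {dO d} {O : measurableType dO}
  {T : measurableType d} {R : realType} (P : probability O R) (n : nat)
  (X : 'I_n -> O -> T) : Prop :=
  forall A : 'I_n -> set T, (forall i, measurable (A i)) ->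
    P (\bigcap_(i in [set: 'I_n]) (X i @^-1` A i)) =
    (\prod_(i < n) P (X i @^-1` A i))%E.

(* Main.v *)
Require Import Defs.
From HB Require Import structures.
From mathcomp Require Import all_boot all_order all_algebra.
From mathcomp Require Import all_classical all_reals all_analysis.
From mathcomp Require Import measurable_realfun.
From mathcomp Require Import ring lra.
Import Order.TTheory GRing.Theory Num.Theory.
Import numFieldNormedType.Exports.
Local Open Scope classical_set_scope.
Local Open Scope ring_scope.


Lemma fsbigT_fin (R : Type) (idx : R) (op : Monoid.com_law idx) (T : finType)
  (f : T -> R) : \big[op/idx]_(i \in [set: T]) f i = \big[op/idx]_(i : T) f i.
Proof.
rewrite (fsbigE (index_enum T)) //.
- by apply: eq_bigl => i; rewrite in_setT.
- exact: index_enum_uniq.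
- by move=> i _; rewrite mem_index_enum.
Qed.

Lemma mlt d (T : measurableType d) (R : realType) (f g : T -> R) :
  measurable_fun setT f -> measurable_fun setT g -> measurable [set w | f w < g w].
Proof.
move=> mf mg.
have -> : [set w | f w < g w] = setT `&` (g \- f) @^-1` `]0, +oo[.
  apply/seteqP; split => w /=.
    by move=> h; split => //; rewrite in_itv /= andbT subr_gt0.
  by move=> [_]; rewrite in_itv /= andbT subr_gt0.
apply: (measurable_funB mg mf) => //; exact: measurable_itv.
Qed.

Lemma bint d (T : measurableType d) (R : realType) (mu : probability T R)
  (f : T -> R) (C : R) : measurable_fun setT f -> (forall y, `|f y| <= C) ->
  mu.-integrable setT (EFin \o f).
Proof.
move=> mf hC; apply: measurable_bounded_integrable => //.
  by rewrite ltey_eq fin_num_measure.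
rewrite /bounded_near; near=> M; rewrite /globally /= => y _; apply: le_trans (hC y) _.
near: M; exact: nbhs_pinfty_ge (num_real C).
Unshelve. all: end_near. Qed.

Lemma Rintegral_sum d (T : measurableType d) (R : realType) (mu : probability T R)
  (I : Type) (s : seq I) (f : I -> T -> R) :
  (forall i, mu.-integrable setT (EFin \o f i)) ->
  \int[mu]_(y in setT) (\sum_(i <- s) f i y) = \sum_(i <- s) \int[mu]_(y in setT) f i y.
Proof.
move=> hi; elim: s => [|a s IH].
  by under eq_Rintegral do rewrite big_nil; rewrite Rintegral_cst // mul0r big_nil.
under eq_Rintegral do rewrite big_cons; rewrite big_cons RintegralD //.
  by rewrite IH.
have -> : (EFin \o fun y => \sum_(i <- s) f i y) = (fun y => \sum_(i <- s) (EFin \o f i) y).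
  by apply/funext => y /=; rewrite sumEFin.
exact: integrable_sum.
Qed.

Lemma Rintegral_indic d (T : measurableType d) (R : realType) (mu : probability T R)
  (A : set T) : measurable A -> \int[mu]_(y in setT) (\1_A y : R) = fine (mu A).
Proof. by move=> mA; rewrite /Rintegral integral_indic // setIT. Qed.

Lemma expineq (R : realType) (y : R) : -(11/40) <= y <= 11/40 ->
  expR y <= 1 + y + 40/29 * y ^+ 2.
Proof.
move=> /andP[h1 h2].
have h3 := expR_ge1Dx (- y).
rewrite expRN in h3.
have ey : 0 < expR y by apply: expR_gt0.
have h4 : 0 < 1 - y by lra.
have h5 : expR y * (1 - y) <= 1.
  have := ler_wpM2l (ltW ey) h3; by rewrite mulfV ?(lt0r_neq0 ey).
have h6 : 1 <= (1 + y + 40/29 * y ^+ 2) * (1 - y) by nra.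
have : expR y * (1 - y) <= (1 + y + 40 / 29 * y ^+ 2) * (1 - y) by lra.
by rewrite ler_pM2r.
Qed.



Lemma mean_le (R : realType) n (a : 'I_n -> R) c : (0 < n)%N ->
  (forall i, a i <= c) -> n%:R^-1 * \sum_(i < n) a i <= c.
Proof.
move=> n0 h; have nR : 0 < n%:R :> R by rewrite ltr0n.
rewrite mulrC ler_pdivrMr //.
apply: le_trans (ler_sum _ (fun i _ => h i)) _.
by rewrite sumr_const card_ord mulr_natr.
Qed.

Lemma sum_sub_const (R : realType) n (a : 'I_n -> R) c :
  \sum_(i < n) (a i - c) = \sum_(i < n) a i - n%:R * c.
Proof. by rewrite sumrB sumr_const card_ord mulr_natl. Qed.

Lemma core (R : realType) (d : measure_display) (T : measurableType d)
  (mu : probability T R)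
  (dO : measure_display) (Omega : measurableType dO) (P : probability Omega R)
  (n : nat) (X : 'I_n -> Omega -> T) (mX : forall i, measurable_fun setT (X i))
  (X_law : forall i A, measurable A -> P (X i @^-1` A) = mu A)
  (X_indep : mutually_independent P X)
  (phi : T -> R) (mphi : measurable_fun setT phi) (m : R)
  (hm : \int[mu]_(y in setT) phi y = m) (hb : forall y, -1 <= phi y - m <= 1)
  (t : R) (t_gt0 : 0 < t) (n_gt0 : (0 < n)%N) :
  (P [set w | (t < n%:R^-1 * \sum_(i < n) phi (X i w) - m)%R]
    <= (expR (- (n%:R * t ^+ 2 / 9)))%:E)%E.
Proof.
have nR : 0 < n%:R :> R by rewrite ltr0n.
have muT : (mu : measure T R) setT = 1%E by exact: probability_setT.
have [t1|t1] := leP 1 t.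
  rewrite [X in P X](_ : _ = set0); first by rewrite measure0 lee_fin expR_ge0.
  apply/seteqP; split => w //= h.
  have : n%:R^-1 * \sum_(i < n) phi (X i w) <= m + 1.
    by apply: mean_le => // i; case/andP: (hb (X i w)) => ? ?; lra.
  lra.
pose K := (Num.trunc (30 / t)).+1.
have KR : 30 / t < K%:R by apply: truncnS_gt.
have K0 : 0 < K%:R :> R by rewrite ltr0n.
pose del : R := 3 / K%:R.
have del0 : 0 < del by rewrite divr_gt0.
have delK : del * K%:R = 3 by rewrite /del divfK // lt0r_neq0.
have Kt : 30 < K%:R * t by rewrite -ltr_pdivrMr.
have delt : del <= t / 10 by nra.
pose r (y : T) : R := (phi y - m + 1) / del.
have rdel y : r y * del = phi y - m + 1 by rewrite /r divfK // lt0r_neq0.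
have r0 y : 0 <= r y.
  rewrite /r divr_ge0 //; [case/andP: (hb y) => ? ?; lra | exact: ltW].
have rK y : r y < K%:R.
  have : 0 < (K%:R - r y) * del by rewrite mulrBl [K%:R * _]mulrC delK rdel; case/andP: (hb y) => ? ?; lra.
  by rewrite pmulr_lgt0 // subr_gt0.
pose bb y : 'I_K := inord (Num.trunc (r y)).
have bbE y : (bb y : nat) = Num.trunc (r y).
  rewrite /bb inordK //.
  have /andP[h1 _] := trunc_itv (r0 y).
  by rewrite -(ltr_nat R); apply: le_lt_trans h1 (rK y).
have bucket y : (bb y)%:R * del - 1 <= phi y - m < (bb y)%:R * del - 1 + del.
  have /andP[h1 h2] := trunc_itv (r0 y).
  rewrite -bbE in h1 h2.
  have h3 := ler_wpM2r (ltW del0) h1.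
  have h4 : r y * del < (bb y).+1%:R * del by rewrite ltr_pM2r.
  rewrite rdel in h3 h4; rewrite -addn1 natrD in h4.
  apply/andP; split; lra.
pose B (j : 'I_K) := bb @^-1` [set j].
have mr : measurable_fun setT r.
  apply: measurable_funM; last exact: measurable_cst.
  apply: measurable_funD; last exact: measurable_cst.
  by apply: measurable_funB => //; exact: measurable_cst.
have mB j : measurable (B j).
  have -> : B j = setT `&` r @^-1` `[j%:R, j.+1%:R[.
    apply/seteqP; split => y /=.
      move=> hy; split => //; rewrite in_itv /=.
      by rewrite -truncn_eq // -bbE hy.
    move=> [_]; rewrite in_itv /= -truncn_eq // -bbE => /eqP hy.
    by apply: val_inj.
  by apply: mr => //; exact: measurable_itv.
pose p j := fine (mu (B j)).
have muB j : mu (B j) = (p j)%:E by rewrite fineK // fin_num_measure.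
have p0 j : 0 <= p j by apply: fine_ge0; exact: measure_ge0.
have stepE (c : 'I_K -> R) y : c (bb y) = \sum_(j < K) c j * \1_(B j) y.
  rewrite (bigD1 (bb y)) //= indicE mem_set // mulr1 big1 ?addr0 // => j hj.
  rewrite indicE memNset ?mulr0 //= => hj'; by rewrite hj' eqxx in hj.
have stepI (c : 'I_K -> R) :
    \int[mu]_(y in setT) (\sum_(j < K) c j * \1_(B j) y) = \sum_(j < K) c j * p j.
  rewrite Rintegral_sum; last first.
    move=> j; apply: (@bint _ _ _ mu _ `|c j|).
      by apply: measurable_funM; [exact: measurable_cst | exact: measurable_indic].
    move=> y; rewrite normrM indicE; case: (_ \in _); rewrite ?normr1 ?normr0 ?mulr1 ?mulr0 //.
  apply: eq_bigr => j _; rewrite RintegralZl //; first by rewrite Rintegral_indic.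
  apply: (@bint _ _ _ mu _ 1); first exact: measurable_indic.
  by move=> y; rewrite indicE; case: (_ \in _); rewrite ?normr1 ?normr0.
have S1 : \sum_(j < K) p j = 1.
  have := stepI (fun _ => 1).
  under eq_Rintegral do rewrite -(stepE (fun _ => 1)).
  rewrite Rintegral_cst // muT /= mul1r => h; rewrite [RHS]h.
  by apply: eq_bigr => j _; rewrite mul1r.
pose l (j : 'I_K) : R := j%:R * del - 1.
have S2 : \sum_(j < K) l j * p j <= 0.
  have e0 : \int[mu]_(y in setT) (phi y - m) = 0.
    rewrite RintegralB //; last first.
      - by apply: (@bint _ _ _ mu _ `|m|) => //; exact: measurable_cst.
      - apply: (@bint _ _ _ mu _ (`|m| + 1)) => // y.
        rewrite -[phi y](subrK m).
        apply: le_trans (ler_normD _ _) _; rewrite addrC lerD2l.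
        by rewrite ler_norml.
    by rewrite hm Rintegral_cst // muT /= mulr1 subrr.
  rewrite -stepI; apply: le_trans (_ : _ <= \int[mu]_(y in setT) (phi y - m)) _; last by rewrite e0.
  apply: le_Rintegral => //.
  - apply: (@bint _ _ _ mu _ 1).
      apply: measurable_sum => j.
      by apply: measurable_funM; [exact: measurable_cst | exact: measurable_indic].
    move=> y; rewrite -(stepE l) /l; have := bucket y; case/andP: (hb y) => ? ?.
    move=> /andP[h2 h3]; rewrite ler_norml; apply/andP; split; last by lra.
    have : 0 <= (bb y)%:R :> R by rewrite ler0n.
    nra.
  - apply: (@bint _ _ _ mu _ 1).
      by apply: measurable_funB => //; exact: measurable_cst.
    by move=> y; rewrite ler_norml.
  - move=> y _; rewrite -(stepE l) /l; by have /andP[] := bucket y.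
pose lam : R := t / 4.
pose u (j : 'I_K) : R := l j + del.
pose Q2 : R := 40 / 29 * (lam ^+ 2 * (121 / 100)).
have S3 j : expR (lam * u j) * p j <= (1 + lam * u j + Q2) * p j.
  case: (pselect (exists y, bb y = j)) => [[y hy]|hno].
    apply: ler_wpM2r => //.
    have := bucket y; rewrite hy => /andP[h1 h2].
    have := hb y => /andP[h3 h4].
    have hu1 : -1 <= u j by rewrite /u /l; lra.
    have hu2 : u j <= 11 / 10 by rewrite /u /l; lra.
    have hl0 : 0 < lam by rewrite /lam divr_gt0.
    have hl1 : lam <= 1 / 4 by rewrite /lam; lra.
    have hy1 : - (11 / 40) <= lam * u j by nra.
    have hy2 : lam * u j <= 11 / 40 by nra.
    have h := @expineq _ _ (introT andP (conj hy1 hy2)).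
    apply: le_trans h _; rewrite /Q2 lerD2l; apply: ler_wpM2l => //.
    rewrite exprMn; apply: ler_wpM2l; first exact: sqr_ge0.
    have : 0 <= (11/10 - u j) * (u j + 11/10) by apply: mulr_ge0; lra.
    rewrite expr2; lra.
  have -> : p j = 0.
    rewrite /p (_ : B j = set0) ?measure0 //.
    by apply/seteqP; split => y //= hy; apply: hno; exists y.
  by rewrite !mulr0.
have Sb : \sum_(j < K) expR (lam * u j) * p j <= 1 + lam * del + Q2.
  apply: le_trans (ler_sum _ (fun j _ => S3 j)) _.
  have -> : \sum_(j < K) (1 + lam * u j + Q2) * p j =
            (1 + lam * del + Q2) * \sum_(j < K) p j + lam * \sum_(j < K) l j * p j.
    rewrite !mulr_sumr -big_split /=; apply: eq_bigr => j _; rewrite /u; ring.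
  rewrite S1 mulr1; have : 0 < lam by rewrite /lam divr_gt0.
  nra.
pose Ef (f : {ffun 'I_n -> 'I_K}) := \bigcap_(i in [set: 'I_n]) (X i @^-1` B (f i)).
have mE f : measurable (Ef f).
  apply: fin_bigcap_measurable; first exact: finite_finset.
  move=> i _; rewrite -[X i @^-1` _]setTI; apply: (mX i) => //; exact: mB.
have PE f : P (Ef f) = (\prod_(i < n) p (f i))%:E.
  rewrite /Ef (X_indep (fun i => B (f i))); last by move=> i; exact: mB.
  rewrite -prodEFin; apply: eq_bigr => i _; by rewrite X_law // muB.
set A := [set w | _].
have mA : measurable A.
  apply: (@mlt _ _ _ (fun _ => t)); first exact: measurable_cst.
  apply: measurable_funB; last exact: measurable_cst.
  apply: measurable_funM; first exact: measurable_cst.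
  apply: (@measurable_sum _ _ _ setT _ (index_enum _) (fun i w => phi (X i w))) => i.
  exact: measurableT_comp.
have Adec : A = \bigcup_(f in [set: {ffun 'I_n -> 'I_K}]) (A `&` Ef f).
  apply/seteqP; split => [w Aw|w [f _ [Aw _]] //].
  exists [ffun i => bb (X i w)] => //; split => // i _ /=; by rewrite ffunE.
have triv : trivIset [set: {ffun 'I_n -> 'I_K}] (fun f => A `&` Ef f).
  move=> f g _ _ [w [[_ hf] [_ hg]]]; apply/ffunP => i.
  by rewrite -(hf i I) -(hg i I).
have PA : P A = \sum_(f : {ffun 'I_n -> 'I_K}) P (A `&` Ef f).
  rewrite {1}Adec (measure_fin_bigcup P finite_finset triv) ?fsbigT_fin //.
  by move=> f _; exact: measurableI.
have Pf f : (P (A `&` Ef f) <= (expR (lam * \sum_(i < n) u (f i) - lam * (n%:R * t))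
                               * \prod_(i < n) p (f i))%:E)%E.
  case: (pselect (exists w, (A `&` Ef f) w)) => [[w [Aw Ew]]|hno]; last first.
    rewrite (_ : A `&` Ef f = set0) ?measure0; last first.
      by apply/seteqP; split => w // hw; apply: hno; exists w.
    by rewrite lee_fin mulr_ge0 ?expR_ge0 // prodr_ge0.
  have hsum : n%:R * t <= \sum_(i < n) u (f i).
    have h1 : \sum_(i < n) (phi (X i w) - m) <= \sum_(i < n) u (f i).
      apply: ler_sum => i _; have := bucket (X i w); rewrite (Ew i I) => /andP[_ h].
      by apply: ltW; move: h; rewrite /u /l.
    rewrite sum_sub_const in h1.
    move: Aw; rewrite /A /= => Aw.
    have : n%:R * (t + m) < n%:R * (n%:R^-1 * \sum_(i < n) phi (X i w)).
      by rewrite ltr_pM2l //; lra.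
    rewrite mulrA mulfV ?mul1r; last exact: lt0r_neq0.
    lra.
  have hl0 : 0 < lam by rewrite /lam divr_gt0.
  apply: (@le_trans _ _ (P (Ef f))).
    exact: (le_measure _ (mem_set (measurableI _ _ mA (mE f))) (mem_set (mE f)) (@subIsetr _ A (Ef f))).
  rewrite PE lee_fin ler_peMl //; first exact: prodr_ge0.
  apply: le_trans (expR_ge1Dx _); rewrite lerDl -mulrBr; apply: mulr_ge0; lra.
rewrite PA.
have hs : (\sum_(f : {ffun 'I_n -> 'I_K}) P (A `&` Ef f) <= \sum_(f : {ffun 'I_n -> 'I_K})
    (expR (lam * \sum_(i < n) u (f i) - lam * (n%:R * t)) * \prod_(i < n) p (f i))%:E)%E.
  by apply: lee_sum => f _; exact: Pf.
apply: le_trans hs _.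
rewrite sumEFin lee_fin.
have -> : \sum_(f : {ffun 'I_n -> 'I_K}) expR (lam * \sum_(i < n) u (f i) - lam * (n%:R * t))
            * \prod_(i < n) p (f i)
        = expR (- (lam * (n%:R * t))) * (\sum_(j < K) expR (lam * u j) * p j) ^+ n.
  transitivity (expR (- (lam * (n%:R * t))) *
     \sum_(f : {ffun 'I_n -> 'I_K}) \prod_(i < n) (expR (lam * u (f i)) * p (f i))).
    rewrite mulr_sumr; apply: eq_bigr => f _.
    by rewrite addrC expRD mulr_sumr expR_sum -mulrA -big_split.
  congr (_ * _).
  transitivity (\prod_(i < n) \sum_(j < K) expR (lam * u j) * p j).
    by rewrite bigA_distr_bigA.
  by rewrite prodr_const card_ord.
set S := \sum_(j < K) _.
have S0 : 0 <= S by apply: sumr_ge0 => j _; rewrite mulr_ge0 ?expR_ge0.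
have SE : S <= expR (lam * del + Q2).
  by apply: le_trans Sb _; rewrite -addrA; exact: expR_ge1Dx.
have SEn : S ^+ n <= expR (lam * del + Q2) ^+ n.
  by apply: lerXn2r; rewrite ?nnegrE ?expR_ge0.
apply: le_trans (ler_wpM2l (expR_ge0 _) SEn) _.
rewrite -expRM_natl -expRD ler_expR.
have key : lam * del + Q2 - lam * t <= - (t ^+ 2 / 9).
  rewrite /Q2 /lam; nra.
have -> : - (lam * (n%:R * t)) + n%:R * (lam * del + Q2) = n%:R * (lam * del + Q2 - lam * t).
  by ring.
have -> : - (n%:R * t ^+ 2 / 9) = n%:R * (- (t ^+ 2 / 9)) by ring.
by rewrite ler_wpM2l // ltW.
Qed.



Lemma emp_int d (T : measurableType d) (R : realType) (s : seq T) (psi : T -> R) :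
  measurable_fun setT psi -> (forall y, 0 <= psi y) ->
  \int[empirical s]_(y in setT) psi y =
  (size s)%:R^-1 * \sum_(i < size s) psi (nth point s i).
Proof.
move=> mpsi psi0.
have mE : measurable_fun setT (EFin \o psi) by apply/measurable_EFinP.
rewrite /Rintegral /empirical ge0_integral_mscale //; last by move=> y _; rewrite lee_fin.
rewrite ge0_integral_measure_sum //; last by move=> y _; rewrite lee_fin.
under eq_bigr do rewrite integral_dirac // diracT mul1e.
by rewrite sumEFin.
Qed.

Lemma emp_size d (T : measurableType d) (R : realType) (s : seq T) n (Y : 'I_n -> T)
  (psi : T -> R) :
  measurable_fun setT psi -> (forall y, 0 <= psi y) ->
  size s = n -> (forall i : 'I_n, nth point s i = Y i) ->
  \int[empirical s]_(y in setT) psi y = n%:R^-1 * \sum_(i < n) psi (Y i).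
Proof.
move=> mpsi psi0 sz hY; rewrite emp_int //.
rewrite -(big_mkord xpredT (fun i => psi (nth point s i))) sz big_mkord.
by congr (_ * _); apply: eq_bigr => i _; rewrite hY.
Qed.

Lemma emp_seq d (T : measurableType d) (R : realType) dO (Omega : measurableType dO)
  n (X : 'I_n -> Omega -> T) (w : Omega) (psi : T -> R) :
  measurable_fun setT psi -> (forall y, 0 <= psi y) ->
  \int[empirical [seq X i w | i <- enum 'I_n]]_(y in setT) psi y =
  n%:R^-1 * \sum_(i < n) psi (X i w).
Proof.
move=> mpsi psi0; apply: emp_size => //.
  rewrite size_map; exact: fintype.size_enum_ord.
move=> i; rewrite (nth_map i); last by rewrite -cardE card_ord.
by rewrite fintype.nth_ord_enum.
Qed.

Lemma mset_mean (R : realType) d (T : measurableType d) dO (Omega : measurableType dO) n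
  (X : 'I_n -> Omega -> T) (mX : forall i, measurable_fun setT (X i))
  (phi : T -> R) (mphi : measurable_fun setT phi) (t m : R) :
  measurable [set w | (t < n%:R^-1 * \sum_(i < n) phi (X i w) - m)%R].
Proof.
apply: (@mlt _ _ _ (fun _ => t)); first exact: measurable_cst.
apply: measurable_funB; last exact: measurable_cst.
apply: measurable_funM; first exact: measurable_cst.
apply: (@measurable_sum _ _ _ setT _ (index_enum _) (fun i w => phi (X i w))) => i.
exact: measurableT_comp.
Qed.



Theorem lemma3 (R : realType) (M : metricType R)
  (m0 : M) (hcompact : compact [set: M])
  (mu : probability (borel m0) R)
  (k : borel m0 * borel m0 -> R)
  (mk : measurable_fun [set: borel m0 * borel m0] k)
  (k01 : forall z, 0 <= k z <= 1)
  (Ms : set (borel m0)) (mMs : measurable Ms)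
  (rho : R) (rho_gt0 : 0 < rho)
  (vstar : borel m0 -> R)
  (mvstar : measurable_fun (~` Ms) vstar)
  (vstar01 : forall x, (~` Ms) x -> 0 <= vstar x <= 1)
  (vstar_fix : forall x, (~` Ms) x -> Top mu k Ms rho vstar x = vstar x)
  (vstar_uniq : forall w : borel m0 -> R, measurable_fun (~` Ms) w ->
     (forall x, (~` Ms) x -> 0 <= w x <= 1) ->
     (forall x, (~` Ms) x -> Top mu k Ms rho w x = w x) ->
     forall x, (~` Ms) x -> w x = vstar x)
  (n : nat) (n_gt0 : (0 < n)%N)
  (dO : measure_display) (Omega : measurableType dO) (P : probability Omega R)
  (X : 'I_n -> Omega -> borel m0)
  (mX : forall i, measurable_fun [set: Omega] (X i))
  (X_law : forall i A, measurable A -> P (X i @^-1` A) = mu A)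
  (X_indep : mutually_independent P X)
  (x : borel m0) (hx : (~` Ms) x) (eps : R) (eps_gt0 : 0 < eps) :
  (P [set w | (eps < `| Top mu k Ms rho vstar x
                     - Top (empirical [seq X i w | i <- enum 'I_n]) k Ms rho vstar x |)%R]
  < (4 * expR (- (n%:R * rho ^+ 2 * eps ^+ 2 / 9)))%:E)%E.
Proof.
have nR : 0 < n%:R :> R by rewrite ltr0n.
have muT : (mu : measure _ R) setT = 1%E by exact: probability_setT.
pose kx (y : borel m0) := k (x, y).
have mkx : measurable_fun setT kx.
  apply: (measurableT_comp mk).
  exact: measurable_fun_pair (measurable_cst _) (@measurable_id _ _ _).
have kx01 y : 0 <= kx y <= 1 := k01 (x, y).
pose kv (y : borel m0) := kx y * vstar y.
have mkv : measurable_fun (~` Ms) kv.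
  by apply: measurable_funM => //; exact: measurable_funTS.
have mMsC := measurableC mMs.
pose F1 := kx \_ Ms.
pose F2 := kv \_ (~` Ms).
have mF1 : measurable_fun setT F1.
  exact: (measurable_restrictT kx mMs).1 (measurable_funTS mkx).
have mF2 : measurable_fun setT F2 by exact: (measurable_restrictT kv mMsC).1 mkv.
pose F y := F1 y + F2 y.
have mF : measurable_fun setT F by exact: measurable_funD.
have Fb y : 0 <= F y /\ F y <= kx y.
  rewrite /F /F1 /F2 !patchE; case/andP: (kx01 y) => k0 k1.
  case hM : (y \in Ms).
    rewrite in_setC hM /=; have -> : (point : R) = 0 by []; lra.
  have hy : (~` Ms) y by move=> hy; rewrite mem_set in hM.
  rewrite (mem_set hy) /=; have -> : (point : R) = 0 by [].
  case/andP: (vstar01 _ hy) => v0 v1; rewrite /kv add0r; split; first exact: mulr_ge0.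
  by rewrite ler_piMr.
have F1b y : 0 <= F1 y <= 1.
  rewrite /F1 patchE; case/andP: (kx01 y) => k0 k1; case: ifP => _ //.
  by rewrite lexx ler01.
have F2b y : 0 <= F2 y <= 1.
  rewrite /F2 patchE; case/andP: (kx01 y) => k0 k1; case: ifP => [/set_mem hy|_].
    case/andP: (vstar01 _ hy) => v0 v1; rewrite /kv; apply/andP; split; first exact: mulr_ge0.
    by rewrite mulr_ile1.
  by rewrite lexx ler01.
have intb (f : borel m0 -> R) : measurable_fun setT f -> (forall y, 0 <= f y <= 1) ->
    mu.-integrable setT (EFin \o f).
  move=> mf hf; apply: (@bint _ _ _ mu _ 1) => // y.
  by case/andP: (hf y) => h0 h1; rewrite ger0_norm.
have Fb' y : 0 <= F y <= 1.
  by case: (Fb y) => h0 h1; case/andP: (kx01 y) => _ h2; rewrite h0 /=; lra.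
pose N := \int[mu]_(y in Ms) k (x, y) + \int[mu]_(y in ~` Ms) (k (x, y) * vstar y).
pose Dm := \int[mu]_(y in setT) k (x, y).
have hN : N = \int[mu]_(y in setT) F y.
  rewrite /N (@Rintegral_mkcond _ _ _ _ Ms) (@Rintegral_mkcond _ _ _ _ (~` Ms)).
  rewrite /F RintegralD //; [exact: intb | exact: intb].
have Dm1 : Dm <= 1.
  rewrite /Dm; apply: le_trans (_ : _ <= \int[mu]_(y in setT) (1 : R)) _.
    apply: le_Rintegral.
    - by [].
    - exact: intb.
    - by apply: intb; [exact: measurable_cst | move=> y; rewrite ler01 lexx].
    - by move=> y _; case/andP: (kx01 y).
  by rewrite Rintegral_cst // muT /= mulr1.
have ND : N <= Dm.
  rewrite hN /Dm; apply: le_Rintegral.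
  - by [].
  - exact: intb.
  - exact: intb.
  - by move=> y _; case: (Fb y).
have N0 : 0 <= N by rewrite hN; apply: Rintegral_ge0 => y _; case: (Fb y).
have rD0 : 0 < rho + Dm by lra.
pose th := N / (rho + Dm).
have thE : th * (rho + Dm) = N by rewrite /th divfK // lt0r_neq0.
have th0 : 0 <= th by rewrite /th divr_ge0 // ltW.
have th1 : th * (rho + 1) <= 1.
  have : 0 <= (rho + Dm) * (1 - th * (rho + 1)) by nra.
  by rewrite pmulr_rge0 // subr_ge0.
have Tmu : Top mu k Ms rho vstar x = th by [].
have th1' : th <= 1 by nra.
pose aw w := n%:R^-1 * \sum_(i < n) F (X i w).
pose bw w := n%:R^-1 * \sum_(i < n) kx (X i w).
have F1_0 y : 0 <= F1 y by case/andP: (F1b y).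
have F2_0 y : 0 <= F2 y by case/andP: (F2b y).
have kx_0 y : 0 <= kx y by case/andP: (kx01 y).
have TS w : Top (empirical [seq X i w | i <- enum 'I_n]) k Ms rho vstar x = aw w / (rho + bw w).
  rewrite /Top (@Rintegral_mkcond _ _ _ _ Ms) (@Rintegral_mkcond _ _ _ _ (~` Ms)).
  rewrite (@emp_seq _ _ _ _ _ n X w _ mF1 F1_0) (@emp_seq _ _ _ _ _ n X w _ mF2 F2_0) (@emp_seq _ _ _ _ _ n X w _ mkx kx_0).
  by rewrite -mulrDr -big_split.
have bw0 w : 0 <= bw w.
  by apply: mulr_ge0; [rewrite invr_ge0 ltW | apply: sumr_ge0 => i _].
have msum (f : borel m0 -> R) : measurable_fun setT f ->
    measurable_fun setT (fun w => n%:R^-1 * \sum_(i < n) f (X i w)).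
  move=> mf; apply: measurable_funM; first exact: measurable_cst.
  apply: (@measurable_sum _ _ _ setT _ (index_enum _) (fun i w => f (X i w))) => i.
  exact: measurableT_comp.
have maw : measurable_fun setT aw by exact: msum.
have mbw : measurable_fun setT bw by exact: msum.
have mthk : measurable_fun setT (fun y => th * kx y).
  by apply: measurable_funM => //; exact: measurable_cst.
have ithk : mu.-integrable setT (EFin \o (fun y => th * kx y)).
  apply: (@bint _ _ _ mu _ 1) => // y.
  by rewrite normrM !ger0_norm // mulr_ile1 //; case/andP: (kx01 y).
pose h y := F y - th * kx y.
pose mh := N - th * Dm.
have mh_meas : measurable_fun setT h by exact: measurable_funB.
have mh_int : \int[mu]_(y in setT) h y = mh.
  rewrite /h RintegralB //; last exact: intb.
  by rewrite RintegralZl //; [rewrite /mh hN | exact: intb].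
pose h2 y := th * kx y - F y.
pose m2 := th * Dm - N.
have mh2_meas : measurable_fun setT h2 by exact: measurable_funB.
have mh2_int : \int[mu]_(y in setT) h2 y = m2.
  rewrite /h2 RintegralB //; last exact: intb.
  by rewrite RintegralZl //; [rewrite /m2 hN | exact: intb].
have thE' : th * rho + th * Dm = N by rewrite -mulrDr.
have hmE : mh = th * rho by rewrite /mh; lra.
have thr0 : 0 <= th * rho by rewrite mulr_ge0 // ltW.
have hb1 y : -1 <= h y - mh <= 1.
  case: (Fb y) => f0 f1; case/andP: (kx01 y) => k0 k1.
  have a1 : th * kx y <= th by have := ler_wpM2l th0 k1; rewrite mulr1.
  have a2 : 0 <= th * kx y by rewrite mulr_ge0.
  rewrite mulrDr mulr1 in th1.
  rewrite /h hmE; apply/andP; split; lra.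
have hb2 y : -1 <= h2 y - m2 <= 1.
  have := hb1 y; rewrite /h /h2 /mh /m2 => /andP[a b]; apply/andP; split; lra.
have t0 : 0 < rho * eps by rewrite mulr_gt0.
have C1 := @core R _ _ mu _ _ P n X mX X_law X_indep h mh_meas mh mh_int hb1 (rho * eps) t0 n_gt0.
have C2 := @core R _ _ mu _ _ P n X mX X_law X_indep h2 mh2_meas m2 mh2_int hb2 (rho * eps) t0 n_gt0.
have mA1 := @mset_mean R _ _ _ _ n X mX h mh_meas (rho * eps) mh.
have mA2 := @mset_mean R _ _ _ _ n X mX h2 mh2_meas (rho * eps) m2.
set A1 := [set w | (rho * eps < n%:R^-1 * \sum_(i < n) h (X i w) - mh)%R] in C1 mA1.
set A2 := [set w | (rho * eps < n%:R^-1 * \sum_(i < n) h2 (X i w) - m2)%R] in C2 mA2.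
set A := [set w | _].
pose g1 w := eps * (rho + bw w).
pose g2 w := `|th * (rho + bw w) - aw w|.
have AE : A = [set w | g1 w < g2 w].
  rewrite /A; apply/seteqP; split => w /=; rewrite TS Tmu.
    have c0 : 0 < rho + bw w by have := bw0 w; lra.
    have e : `|th - aw w / (rho + bw w)| = g2 w / (rho + bw w).
      rewrite (_ : th - _ = (th * (rho + bw w) - aw w) / (rho + bw w)); last first.
        by field; rewrite lt0r_neq0.
      by rewrite normrM normfV (gtr0_norm c0).
    by rewrite e ltr_pdivlMr // mulrC.
  have c0 : 0 < rho + bw w by have := bw0 w; lra.
  have e : `|th - aw w / (rho + bw w)| = g2 w / (rho + bw w).
    rewrite (_ : th - _ = (th * (rho + bw w) - aw w) / (rho + bw w)); last first.
      by field; rewrite lt0r_neq0.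
    by rewrite normrM normfV (gtr0_norm c0).
  by rewrite e ltr_pdivlMr // mulrC.
have mA : measurable A.
  rewrite AE; apply: mlt.
    apply: measurable_funM; first exact: measurable_cst.
    by apply: measurable_funD => //; exact: measurable_cst.
  apply: measurableT_comp => //; apply: measurable_funB => //.
  apply: measurable_funM; first exact: measurable_cst.
  by apply: measurable_funD => //; exact: measurable_cst.
have sub : A `<=` A1 `|` A2.
  move=> w; rewrite AE /= => hw.
  have eh : n%:R^-1 * \sum_(i < n) h (X i w) = aw w - th * bw w.
    by rewrite /h sumrB -mulr_sumr /aw /bw; ring.
  have eh2 : n%:R^-1 * \sum_(i < n) h2 (X i w) = th * bw w - aw w.
    by rewrite /h2 sumrB -mulr_sumr /aw /bw; ring.
  rewrite /A1 /A2 /= eh eh2.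
  have hb : eps * rho <= g1 w.
    by rewrite /g1 mulrDr lerDl mulr_ge0 // ltW.
  have : rho * eps < `|th * (rho + bw w) - aw w| by rewrite mulrC; apply: le_lt_trans hw.
  rewrite ltr_normr mulrDr => /orP[h1|h1]; [right|left]; rewrite /m2 /mh; lra.
apply: (@le_lt_trans _ _ (P (A1 `|` A2))).
  exact: (le_measure _ (mem_set mA) (mem_set (measurableU _ _ mA1 mA2)) sub).
apply: (@le_lt_trans _ _ (P A1 + P A2)%E).
  exact: measureU2.
apply: le_lt_trans (leeD C1 C2) _.
rewrite -EFinD lte_fin exprMn mulrA.
have := expR_gt0 (- (n%:R * rho ^+ 2 * eps ^+ 2 / 9)).
lra.
Qed.
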